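(* Let $n\geqslant 2$ and $\alpha\in\mathbf{I}\mathbb{N}_{\infty}^n$. Then there exist a unique element $\sigma_\alpha$ of the group of units $H(\mathbb{I})$ and unique idempotents $\varepsilon_{l(\alpha)},\varepsilon_{r(\alpha)}$ of $\mathbf{I}\mathbb{N}_{\infty}^n$ such that $\alpha=\sigma_\alpha\varepsilon_{l(\alpha)}=\varepsilon_{r(\alpha)}\sigma_\alpha$.
   Context: $\mathbb{N}=\{1,2,3,\ldots\}$, $n\geqslant 2$, and $\mathbb{N}^n$ carries the Euclidean metric $d$. A partial isometry of $\mathbb{N}^n$ is an injective partial map $\alpha\colon\mathbb{N}^n\rightharpoonup\mathbb{N}^n$ with $d((\mathbf{x})\alpha,(\mathbf{y})\alpha)=d(\mathbf{x},\mathbf{y})$ for all $\mathbf{x},\mathbf{y}\in\operatorname{dom}\alpha$; it is cofinite if $\mathbb{N}^n\setminus\operatorname{dom}\alpha$ and $\mathbb{N}^n\setminus\operatorname{ran}\alpha$ are finite. $\mathbf{I}\mathbb{N}_{\infty}^n$ is the monoid of all partial cofinite isometries of $\mathbb{N}^n$ under composition of partial maps written on the right: $\mathbf{x}(\alpha\beta)=(\mathbf{x}\alpha)\beta$ with $\operatorname{dom}(\alpha\beta)=\{\mathbf{x}\in\operatorname{dom}\alpha\colon \mathbf{x}\alpha\in\operatorname{dom}\beta\}$. Its identity is the identity map $\mathbb{I}$ of $\mathbb{N}^n$ and $H(\mathbb{I})$ is its group of units. *)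

(* Defs.v *)
From HB Require Import structures.
From mathcomp Require Import all_boot all_order all_algebra.
Set Implicit Arguments. Unset Strict Implicit. Unset Printing Implicit Defensive.
Import Order.TTheory GRing.Theory Num.Theory.

Definition Nn (n : nat) := {x : {ffun 'I_n -> nat} | [forall i, 0 < x i]}.

(* Squared Euclidean distance; d(x,y) = sqrt (dist2 x y), so d is preserved
   iff dist2 is preserved. *)
Definition dist2 (n : nat) (x y : Nn n) : int :=
  (\sum_(i < n) (((val x) i)%:Z - ((val y) i)%:Z) ^+ 2)%R.

Definition ppmap (n : nat) := Nn n -> option (Nn n).

(* Composition written on the right: x (a b) = (x a) b. *)
Definition pmul (n : nat) (a b : ppmap n) : ppmap n :=
  fun x => obind b (a x).

Definition pid {n : nat} : ppmap n := fun x => Some x.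

Definition pinjective (n : nat) (a : ppmap n) : Prop :=
  forall x y z, a x = Some z -> a y = Some z -> x = y.

Definition pisometry (n : nat) (a : ppmap n) : Prop :=
  forall x y x' y', a x = Some x' -> a y = Some y' -> dist2 x' y' = dist2 x y.

Definition pcofinite (n : nat) (a : ppmap n) : Prop :=
  (exists s : seq (Nn n), forall x, a x = None -> x \in s) /\
  (exists s : seq (Nn n), forall y, (~ exists x, a x = Some y) -> y \in s).

Definition INinf (n : nat) (a : ppmap n) : Prop :=
  pinjective a /\ pisometry a /\ pcofinite a.

Definition unitH (n : nat) (s : ppmap n) : Prop :=
  INinf s /\ exists t, INinf t /\ pmul s t = (@pid n) /\ pmul t s = (@pid n).

Definition idemp (n : nat) (e : ppmap n) : Prop :=
  INinf e /\ pmul e e = e.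

(* Main.v *)
Require Import Defs.
From HB Require Import structures.
From mathcomp Require Import all_boot all_order all_algebra all_fingroup.
From mathcomp Require Import zify ring lra.
From Stdlib Require Import FunctionalExtensionality Classical.

Set Implicit Arguments. Unset Strict Implicit. Unset Printing Implicit Defensive.
Import Order.TTheory GRing.Theory Num.Theory.
Local Open Scope ring_scope.

Section Aux.
Variable n : nat.

Definition cc (x : Nn n) (i : 'I_n) : int := ((val x) i)%:Z.

Lemma pt_proof (v : 'I_n -> nat) : [forall i, 0 < [ffun i => (v i).+1] i]%N.
Proof. by apply/forallP => i; rewrite ffunE. Qed.

Definition pt (v : 'I_n -> nat) : Nn n :=
  exist (fun x : {ffun 'I_n -> nat} => [forall i, 0 < x i]%N) _ (pt_proof v).

Lemma val_pt v i : val (pt v) i = (v i).+1.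
Proof. by rewrite /= ffunE. Qed.

Lemma cc_pt v i : cc (pt v) i = ((v i).+1)%:Z.
Proof. by rewrite /cc val_pt. Qed.

Lemma val_pos (x : Nn n) i : (0 < val x i)%N.
Proof. by case: x => x /= /forallP. Qed.

Lemma cc_pos x i : 0 < cc x i.
Proof. by rewrite /cc ltz_nat val_pos. Qed.

Lemma Nn_eq (x y : Nn n) : (forall i, val x i = val y i) -> x = y.
Proof. by move=> h; apply: val_inj; apply/ffunP => i; apply: h. Qed.

Lemma polar (f : ppmap n) (hf : pisometry f) x y z x' y' z' :
  f x = Some x' -> f y = Some y' -> f z = Some z' ->
  \sum_i (cc x' i - cc z' i) * (cc y' i - cc z' i) =
  \sum_i (cc x i - cc z i) * (cc y i - cc z i).
Proof.
move=> hx hy hz.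
have key : forall a b c : Nn n, 2 * \sum_i (cc a i - cc c i) * (cc b i - cc c i)
    = dist2 a c + dist2 b c - dist2 a b.
  move=> a b c; rewrite /dist2 mulr_sumr -big_split /= -sumrB.
  by apply: eq_bigr => i _; rewrite /cc; ring.
apply: (@mulfI _ 2) => //.
by rewrite !key (hf _ _ _ _ hx hz) (hf _ _ _ _ hy hz) (hf _ _ _ _ hx hy).
Qed.

Lemma unit_vec (u : 'I_n -> int) : \sum_i u i ^+ 2 = 1 ->
  exists k, (u k = 1 \/ u k = -1) /\ forall i, i != k -> u i = 0.
Proof.
move=> hs.
have [k hk] : exists k, u k != 0.
  apply: NNPP => hn0.
  suff : \sum_i u i ^+ 2 = 0 by rewrite hs.
  apply: big1 => i _; apply/eqP; rewrite sqrf_eq0.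
  case: eqP => // /eqP hi; exfalso; apply: hn0; exists i; exact: hi.
exists k; move: hs; rewrite (bigD1 k) //= => hs.
have h1 : 1 <= u k ^+ 2.
  rewrite expr2; move: (u k) hk => a ha.
  have : a < 0 \/ 0 < a by move: ha; lia.
  by case=> h; nia.
have h2 : 0 <= \sum_(i | i != k) u i ^+ 2 by apply: sumr_ge0 => i _; apply: sqr_ge0.
have e1 : u k ^+ 2 = 1 by move: hs h1 h2; set s1 := u k ^+ 2; set s2 := \sum_(i | i != k) _; lia.
have e2 : \sum_(i | i != k) u i ^+ 2 = 0 by move: hs h1 h2; set s1 := u k ^+ 2; set s2 := \sum_(i | i != k) _; lia.
split.
  by move/eqP: e1; rewrite sqrf_eq1 => /orP[] /eqP; [left|right].
move=> i hi; move/eqP: e2; rewrite psumr_eq0; last by move=> j _; apply: sqr_ge0.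
move/allP => /(_ i (mem_index_enum i)); rewrite hi /= sqrf_eq0 => /eqP //.
Qed.

Definition bnd (L : seq (Nn n)) : nat := (\sum_(x <- L) \sum_i val x i)%N.

Lemma bnd_out (L : seq (Nn n)) (x : Nn n) (i : 'I_n) : (bnd L < val x i)%N -> x \notin L.
Proof.
move=> hlt; apply/negP => xL.
have h1 : (val x i <= \sum_i val x i)%N by rewrite (bigD1 i) //= leq_addr.
have h2 : (\sum_i val x i <= bnd L)%N.
  rewrite /bnd; elim: L xL {hlt} => //= y L IH.
  rewrite in_cons big_cons => /orP[/eqP -> | /IH h]; first exact: leq_addr.
  exact: leq_trans h (leq_addl _ _).
by move: hlt; rewrite ltnNge (leq_trans h1 h2).
Qed.


Definition smap (p : {perm 'I_n}) (x : Nn n) : Nn n :=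
  pt (fun k => (val x ((p^-1)%g k)).-1).

Lemma val_smap p x k : val (smap p x) k = val x ((p^-1)%g k).
Proof. by rewrite val_pt prednK // val_pos. Qed.

Lemma exists_other (hn : (2 <= n)%N) (j : 'I_n) : exists k : 'I_n, k != j.
Proof.
have h0 : (0 < n)%N by apply: leq_trans hn.
have h1 : (1 < n)%N by [].
case: (eqVneq j (Ordinal h0)) => [-> | hj]; last by exists (Ordinal h0); rewrite eq_sym.
by exists (Ordinal h1); apply/eqP => /(congr1 val).
Qed.

Lemma rigid (hn : (2 <= n)%N) (f : ppmap n) (hf : pisometry f)
  (Ld Lr : seq (Nn n))
  (hd : forall x, f x = None -> x \in Ld)
  (hr : forall y, (~ exists x, f x = Some y) -> y \in Lr) :
  exists p : {perm 'I_n}, forall x y, f x = Some y -> y = smap p x.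
Proof.
set B := bnd (Ld ++ Lr).
have dom : forall (x : Nn n) (i : 'I_n), (B < val x i)%N -> exists y, f x = Some y.
  move=> x i hi; case e: (f x) => [y|]; first by exists y.
  by move: (bnd_out hi); rewrite mem_cat (hd _ e).
have ran : forall (y : Nn n) (i : 'I_n), (B < val y i)%N -> exists x, f x = Some y.
  move=> y i hi; apply: NNPP => h.
  by move: (bnd_out hi); rewrite mem_cat (hr _ h) orbT.
have h0 : (0 < n)%N by apply: leq_trans hn.
set z := pt (fun _ => B).
have [fz hfz] : exists y, f z = Some y by apply: (dom z (Ordinal h0)); rewrite val_pt.
set ze := fun j : 'I_n => pt (fun i => B + (i == j))%N.
have Hfe : forall j, exists y, f (ze j) = Some y.
  move=> j; apply: (dom _ j); rewrite val_pt eqxx; lia.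
have [fe hfe] := fin_all_exists Hfe.
have dze : forall j i, cc (ze j) i - cc z i = (i == j)%:Z.
  move=> j i; rewrite !cc_pt; case: (i == j) => /=; lia.
set u := fun j i => cc (fe j) i - cc fz i.
have hu : forall j l, \sum_i u j i * u l i = (j == l)%:Z.
  move=> j l; rewrite /u (polar hf (hfe j) (hfe l) hfz).
  under eq_bigr => i _ do rewrite !dze.
  rewrite (bigD1 j) //= big1 => [|i hij]; first by rewrite eqxx mul1r addr0.
  by rewrite (negbTE hij) mul0r.
have Hpi : forall j, exists k,
    (u j k = 1 \/ u j k = -1) /\ forall i, i != k -> u j i = 0.
  move=> j; apply: unit_vec.
  have h := hu j j; rewrite eqxx in h; rewrite -[RHS]/((true:nat)%:Z) -h.
  by apply: eq_bigr => i _; rewrite expr2.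
have [pi hpi] := fin_all_exists Hpi.
have pi_inj : injective pi.
  move=> j l e; apply/eqP; have := hu j l.
  rewrite (bigD1 (pi j)) //= big1 => [|i hi]; last by rewrite ((hpi j).2 i hi) mul0r.
  rewrite addr0 {2}e; case: (j == l) => //.
  by case: (hpi j).1 => ->; case: (hpi l).1 => ->.
have rel : forall x y, f x = Some y -> forall j,
    (cc y (pi j) - cc fz (pi j)) * u j (pi j) = cc x j - cc z j.
  move=> x y hxy j; have := polar hf hxy (hfe j) hfz.
  rewrite (bigD1 (pi j)) //= big1 => [|i hi]; last by rewrite -/(u j i) ((hpi j).2 i hi) mulr0.
  rewrite addr0 => ->.
  under eq_bigr => i _ do rewrite dze.
  rewrite (bigD1 j) //= big1 => [|i hij]; first by rewrite eqxx mulr1 addr0.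
  by rewrite (negbTE hij) mulr0.
have sgn : forall j, u j (pi j) = 1.
  move=> j; case: (hpi j).1 => // hm.
  set x := pt (fun i => if i == j then (B + val fz (pi j))%N else B).
  have [y hy] : exists y, f x = Some y by apply: (dom x j); rewrite val_pt eqxx; lia.
  have := rel _ _ hy j; rewrite hm /x cc_pt eqxx !cc_pt.
  have := cc_pos y (pi j); rewrite /cc; lia.
have rel2 : forall x y, f x = Some y -> forall j,
    cc y (pi j) = cc x j - cc z j + cc fz (pi j).
  move=> x y hxy j; have := rel _ _ hxy j; rewrite sgn; lia.
have dz : forall j, cc fz (pi j) = cc z j.
  move=> j; apply/eqP; rewrite eq_le; apply/andP; split.
    have [k hk] := exists_other hn (pi j).
    set y := pt (fun i => if i == pi j then 0%N else B).
    have [x hx] : exists x, f x = Some y by apply: (ran y k); rewrite val_pt (negbTE hk).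
    have := rel2 _ _ hx j; rewrite /y cc_pt eqxx.
    have := cc_pos x j; lia.
  have [k hk] := exists_other hn j.
  set x := pt (fun i => if i == j then 0%N else B).
  have [y hy] : exists y, f x = Some y by apply: (dom x k); rewrite val_pt (negbTE hk).
  have := rel2 _ _ hy j; rewrite /x cc_pt eqxx.
  have := cc_pos y (pi j); rewrite /z cc_pt; lia.
exists (perm pi_inj) => x y hxy; apply: Nn_eq => k.
rewrite val_smap.
set j := ((perm pi_inj)^-1)%g k.
have -> : k = pi j by rewrite /j -{1}(permKV (perm pi_inj) k) permE.
have := rel2 _ _ hxy j; rewrite dz /cc; lia.
Qed.

Lemma smapK (p : {perm 'I_n}) x : smap (p^-1)%g (smap p x) = x.
Proof. by apply: Nn_eq => k; rewrite !val_smap invgK permK. Qed.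

Lemma smapKV (p : {perm 'I_n}) x : smap p (smap (p^-1)%g x) = x.
Proof. by apply: Nn_eq => k; rewrite !val_smap invgK permKV. Qed.

Lemma dist2_smap (p : {perm 'I_n}) x y : dist2 (smap p x) (smap p y) = dist2 x y.
Proof.
rewrite /dist2 [RHS](reindex_inj (@perm_inj _ (p^-1)%g)) /=.
by apply: eq_bigr => k _; rewrite !val_smap.
Qed.

Lemma INinf_smap (p : {perm 'I_n}) : INinf (fun x => Some (smap p x)).
Proof.
split; [|split; [|split]].
- move=> x y z [<-] /(congr1 (omap (smap (p^-1)%g))) /=.
  by rewrite !smapK => -[].
- by move=> x y x' y' [<-] [<-]; apply: dist2_smap.
- by exists [::].
- exists [::] => y h; exfalso; apply: h; exists (smap (p^-1)%g y); by rewrite smapKV.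
Qed.

Lemma unitH_smap (p : {perm 'I_n}) : unitH (fun x => Some (smap p x)).
Proof.
split; first exact: INinf_smap.
exists (fun x => Some (smap (p^-1)%g x)); split; first exact: INinf_smap.
split; apply: functional_extensionality => x; rewrite /pmul /=.
  by rewrite smapK.
by rewrite smapKV.
Qed.

Lemma idemp_id (e : ppmap n) : idemp e -> forall x, e x = None \/ e x = Some x.
Proof.
move=> [[hi _] he] x; case ex: (e x) => [y|]; last by left.
right; have : pmul e e x = e x by rewrite he.
rewrite /pmul ex /= => ey; congr Some; apply: hi ey ex.
Qed.

Lemma unit_perm (hn : (2 <= n)%N) (s : ppmap n) : unitH s ->
  exists p : {perm 'I_n}, forall x, s x = Some (smap p x).
Proof.
move=> [[_ [hs _]] [t [_ [e1 e2]]]].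
have tot : forall x, exists y, s x = Some y.
  move=> x; have : pmul s t x = Some x by rewrite e1.
  by rewrite /pmul; case: (s x) => [y|] //= _; exists y.
have onto : forall y, exists x, s x = Some y.
  move=> y; have : pmul t s y = Some y by rewrite e2.
  by rewrite /pmul; case: (t y) => [x|] //= h; exists x.
have hd : forall x, s x = None -> x \in [::].
  by move=> x h; have [y hy] := tot x; rewrite hy in h.
have hr : forall y, (~ exists x, s x = Some y) -> y \in [::].
  by move=> y h; exfalso; apply: h; apply: onto.
have [p hp] := @rigid hn s hs [::] [::] hd hr.
exists p => x; have [y hy] := tot x; by rewrite hy (hp _ _ hy).
Qed.

Lemma idemp_part (e : ppmap n) (L : seq (Nn n)) :
  (forall x, e x = None \/ e x = Some x) -> (forall x, e x = None -> x \in L) ->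
  idemp e.
Proof.
move=> he hL; split; last first.
  apply: functional_extensionality => x; rewrite /pmul.
  by case: (he x) => h; rewrite h //= h.
split; [|split; [|split]].
- move=> x y z ex ey.
  case: (he x) ex => -> // [->]; by case: (he y) ey => -> // [->].
- move=> x y x' y' ex ey.
  case: (he x) ex => -> // [<-]; by case: (he y) ey => -> // [<-].
- by exists L.
- exists L => y h; apply: hL; case: (he y) => // ey; exfalso; apply: h; by exists y.
Qed.

End Aux.

Local Close Scope ring_scope.

Theorem lemma3p5 (n : nat) (hn : 2 <= n) (a : ppmap n) (ha : INinf a) :
  exists s el er : ppmap n,
    (unitH s /\ idemp el /\ idemp er /\ a = pmul s el /\ a = pmul er s) /\
    (forall s' el' er' : ppmap n,
        unitH s' -> idemp el' -> idemp er' ->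
        a = pmul s' el' -> a = pmul er' s' ->
        s' = s /\ el' = el /\ er' = er).
Proof.
have [hinj [hiso [[Ld hd] [Lr hr]]]] := ha.
have [p hp] := rigid hn hiso hd hr.
pose s := fun x => Some (smap p x).
pose el := fun y => if a (smap (p^-1)%g y) is Some _ then Some y else @None (Nn n).
pose er := fun x => if a x is Some _ then Some x else @None (Nn n).
have sel : a = pmul s el.
  apply: functional_extensionality => x; rewrite /pmul /s /el /= smapK.
  by case e: (a x) => [y|] //; rewrite (hp _ _ e).
have ser : a = pmul er s.
  apply: functional_extensionality => x; rewrite /pmul /s /er.
  by case e: (a x) => [y|] //=; rewrite (hp _ _ e).
exists s, el, er; split.
  split; first exact: unitH_smap.
  split.
    apply: (@idemp_part _ el [seq smap p x | x <- Ld]).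
      by move=> y; rewrite /el; case: (a _); [right|left].
    move=> y; rewrite /el; case e: (a _) => [//|] _.
    by rewrite -(smapKV p y); apply: map_f; apply: hd.
  split; last by split.
  apply: (@idemp_part _ er Ld).
    by move=> x; rewrite /er; case: (a _); [right|left].
  by move=> x; rewrite /er; case e: (a _) => [//|] _; apply: hd.
move=> s' el' er' hs' hel' her' e1 e2.
have [p' hp'] := unit_perm hn hs'.
have agree : forall x y, a x = Some y -> smap p x = smap p' x.
  move=> x y axy; rewrite -(hp _ _ axy).
  move: axy; rewrite e1 /pmul hp' /=.
  case: (idemp_id hel' (smap p' x)) => -> h; [discriminate | by case: h].
have pp : p = p'.
  apply/permP => j.
  pose x := pt (fun i => bnd Ld + (i == j))%N.
  have [y axy] : exists y, a x = Some y.
    case e: (a x) => [y|]; first by exists y.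
    exfalso; move: (hd _ e); apply/negP; apply: (@bnd_out _ _ _ j).
    rewrite val_pt eqxx; lia.
  have e3 : val (smap p x) (p j) = val (smap p' x) (p j) by rewrite (agree _ _ axy).
  move: e3; rewrite !val_smap permK !val_pt eqxx.
  case: eqP => [h|_] /=; last by lia.
  by rewrite -{2}h permKV.
split; first by apply: functional_extensionality => x; rewrite hp' /s pp.
split.
  apply: functional_extensionality => y; rewrite /el.
  have := congr1 (fun f => f (smap (p^-1)%g y)) e1; rewrite /pmul hp' -pp smapKV /= => ->.
  by case: (idemp_id hel' y) => ->.
apply: functional_extensionality => x; rewrite /er.
have := congr1 (fun f => f x) e2; rewrite /pmul => ->.
by case: (idemp_id her' x) => -> //=; rewrite hp'.
Qed.
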